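(* Let $M\ge1$ and $n\ge2$ be integers, $d\in\{1,\dots,n-1\}$, and $0<p<1$. Let $c_1,\dots,c_n$ be independent Bernoulli($p$) bits (the tagged code word), and let $U_1,\dots,U_n$ be random bits, independent of each other and of the $c_i$, with $\Pr(U_i=0)=(1-p)^M$ for $i\le d$ and $\Pr(U_i=0)=(1-p)^{M-1}$ for $i>d$. Say position $i$ is covered if $c_i=0$, or $U_i=1$, or ($i>d$ and $c_{i-d}=1$). Then \[\Pr(\text{every position } i\in\{1,\dots,n\}\text{ is covered})\le\big(1-p(1-p)^M\big)^n.\]
   Context: This models a tagged code word covered by its own copy shifted by $d$ positions together with the other active users: $U_i$ is the Boolean OR of the bits of the other active users at position $i$ ($M$ of them at positions $i\le d$, $M-1$ at positions $i>d$), each of these bits being independently $1$ with probability $p$. *)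

(* Defs.v *)
From mathcomp Require Import all_boot all_order all_algebra.
Set Implicit Arguments. Unset Strict Implicit. Unset Printing Implicit Defensive.
Import Order.TTheory GRing.Theory Num.Theory.
Local Open Scope ring_scope.

(* Positions 1..n of the paper are represented 0-based by i : 'I_n
   (paper position i+1).  Paper "i <= d" becomes "i < d" (0-based),
   paper "i > d" becomes "d <= i", and paper c_{i-d} becomes c (i-d). *)

Definition bern_weight (R : pzRingType) (n : nat) (p : R) (c : {ffun 'I_n -> bool}) : R :=
  \prod_(i < n) (if c i then p else 1 - p).

Definition probU0 (R : pzRingType) (M n d : nat) (p : R) (i : 'I_n) : R :=
  if (i < d)%N then (1 - p) ^+ M else (1 - p) ^+ (M.-1).

Definition U_weight (R : pzRingType) (M n d : nat) (p : R) (U : {ffun 'I_n -> bool}) : R :=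
  \prod_(i < n) (if U i then 1 - probU0 M d p i else probU0 M d p i).

(* Position i is covered: c_i = 0, or U_i = 1, or (i > d and c_{i-d} = 1);
   the last clause is written as "some j with j + d = i has c j = 1". *)
Definition covered (n d : nat) (c U : {ffun 'I_n -> bool}) (i : 'I_n) : bool :=
  [|| ~~ c i, U i | [exists j : 'I_n, (j + d == i)%N && c j]].

Definition prob_all_covered (R : pzRingType) (M n d : nat) (p : R) : R :=
  \sum_(c : {ffun 'I_n -> bool}) \sum_(U : {ffun 'I_n -> bool})
     (if [forall i, covered d c U i] then bern_weight p c * U_weight M d p U else 0).

(* Main.v *)
Require Import Defs.
From mathcomp Require Import all_boot all_order all_algebra.
From mathcomp Require Import ring lra.
Set Implicit Arguments. Unset Strict Implicit. Unset Printing Implicit Defensive.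
Import Order.TTheory GRing.Theory Num.Theory.
Local Open Scope ring_scope.

Section S.
Variables (R : realFieldType) (n d M : nat) (p : R).
Hypotheses (Hd : (1 <= d)%N) (HM : (1 <= M)%N) (p0 : 0 < p) (p1 : p < 1).
Local Notation q := (1 - p).
Local Notation a := ((1 - p) ^+ M).
Local Notation b := ((1 - p) ^+ M.-1).
Local Notation fb := {ffun 'I_n -> bool}.

Definition setc (c : fb) (k : 'I_n) (x : bool) : fb :=
  [ffun i => if i == k then x else c i].

Lemma setcK c k x y : setc (setc c k x) k y = setc c k y.
Proof. by apply/ffunP => i; rewrite !ffunE; case: (i == k). Qed.

Lemma setc_id c k : setc c k (c k) = c.
Proof. by apply/ffunP => i; rewrite !ffunE; case: eqP => // ->. Qed.

Lemma sumS (F : fb -> R) k :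
  \sum_(c : fb) F c = \sum_(c : fb | ~~ c k) (F (setc c k true) + F (setc c k false)).
Proof.
have inj : injective (fun c : fb => setc c k (~~ c k)).
  move=> c1 c2 /(congr1 (fun c => setc c k (~~ c k))).
  by rewrite !ffunE eqxx !setcK !negbK !setc_id.
rewrite big_split /= (bigID (fun c : fb => c k)) /=; congr (_ + _).
  rewrite (@reindex_inj _ _ _ _ (fun c : fb => setc c k (~~ c k)) (fun c : fb => c k) F inj) /=.
  apply: eq_big => [c|c Hc]; first by rewrite ffunE eqxx.
  by move: Hc; rewrite ffunE eqxx => /negbTE ->.
apply: eq_bigr => c /negbTE Hc; by rewrite -Hc setc_id.
Qed.

Lemma bern_setc c k x : bern_weight p (setc c k x) =
  (if x then p else 1 - p) * \prod_(i < n | i != k) (if c i then p else 1 - p).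
Proof.
rewrite /bern_weight (bigD1 k) //= ffunE eqxx; congr (_ * _).
by apply: eq_bigr => i /negbTE Hi; rewrite ffunE Hi.
Qed.

Lemma Eind (F : fb -> R) k : \sum_(c : fb) bern_weight p c * F c =
  \sum_(c : fb) bern_weight p c * (p * F (setc c k true) + (1 - p) * F (setc c k false)).
Proof.
rewrite (sumS _ k) [RHS](sumS _ k); apply: eq_bigr => c _.
rewrite !setcK !bern_setc; ring.
Qed.


Definition g (A : {set 'I_n}) (c : fb) (i : 'I_n) : R :=
  if c i then
    (if [exists j in A, (j + d == i)%N] then
       (if [exists j in A, (j + d == i)%N && c j] then 1 else 1 - b)
     else 1 - a)
  else 1.

Definition Q (A : {set 'I_n}) : R := \sum_(c : fb) bern_weight p c * \prod_(i in A) g A c i.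

Lemma q_ge0 : 0 <= 1 - p. Proof. by rewrite subr_ge0 ltW. Qed.
Lemma q_le1 : 1 - p <= 1. Proof. by rewrite lerBlDr lerDl ltW. Qed.
Lemma a_ge0 : 0 <= a. Proof. exact: exprn_ge0 q_ge0. Qed.
Lemma b_ge0 : 0 <= b. Proof. exact: exprn_ge0 q_ge0. Qed.
Lemma a_le1 : a <= 1. Proof. exact: exprn_ile1 q_ge0 q_le1. Qed.
Lemma b_le1 : b <= 1. Proof. exact: exprn_ile1 q_ge0 q_le1. Qed.
Lemma abq : a = (1 - p) * b.
Proof. by rewrite -exprS prednK. Qed.
Lemma x_le : p * a <= 1/4.
Proof.
have hb := b_le1; have hb0 := b_ge0; have hq := q_ge0; rewrite abq.
have : p * ((1 - p) * b) <= p * (1 - p) by rewrite ler_pM2l // ler_piMr.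
move=> h; apply: (le_trans h); have hs := sqr_ge0 (p - 1/2); nra.
Qed.
Lemma x_ge0 : 0 <= p * a. Proof. by rewrite mulr_ge0 ?a_ge0 // ltW. Qed.

Lemma g_ge0 A c i : 0 <= g A c i.
Proof.
rewrite /g; case: (c i) => //; case: ifP => _; last by rewrite subr_ge0 a_le1.
by case: ifP => _ //; rewrite subr_ge0 b_le1.
Qed.

Lemma bern_ge0 (c : fb) : 0 <= bern_weight p c.
Proof. by apply: prodr_ge0 => i _; case: (c i); rewrite ?q_ge0 // ltW. Qed.

Lemma Q_ge0 A : 0 <= Q A.
Proof.
apply: sumr_ge0 => c _; rewrite mulr_ge0 ?bern_ge0 //.
by apply: prodr_ge0 => i _; apply: g_ge0.
Qed.

Lemma sum_bern : \sum_(c : fb) bern_weight p c = 1.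
Proof.
rewrite /bern_weight -(bigA_distr_bigA (fun (i : 'I_n) (x : bool) => if x then p else 1 - p)).
by rewrite big1 // => i _; rewrite big_bool /= addrC subrK.
Qed.

Lemma Q0 : Q set0 = 1.
Proof.
rewrite /Q -[RHS]sum_bern; apply: eq_bigr => c _.
by rewrite big_pred0 ?mulr1 // => i; rewrite in_set0.
Qed.

Definition chainend (A : {set 'I_n}) (k : 'I_n) := forall i, i \in A -> (k + d != i)%N.

Lemma ex_rem A k i (P : pred 'I_n) : chainend A k -> i \in A ->
  (forall j, P j -> (j + d == i)%N) ->
  [exists j in A, P j] = [exists j in A :\ k, P j].
Proof.
move=> ce iA HP; apply/existsP/existsP => [[j /andP[jA Pj]]|[j /andP[jA Pj]]];
  exists j; last by move: jA; rewrite in_setD1 => /andP[_ ->]; rewrite Pj.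
rewrite in_setD1 jA Pj !andbT; apply/negP => /eqP jk.
by move: (ce i iA); rewrite -jk (HP j Pj).
Qed.

Lemma g_rem A k c i : chainend A k -> i \in A -> g A c i = g (A :\ k) c i.
Proof.
move=> ce iA; rewrite /g (@ex_rem A k i (fun j => (j + d == i)%N) ce iA) //.
by rewrite (@ex_rem A k i (fun j => (j + d == i)%N && c j) ce iA) // => j /andP[].
Qed.

Lemma g_setc (A : {set 'I_n}) k c x i : i != k -> k \notin A -> g A (setc c k x) i = g A c i.
Proof.
move=> ik kA; rewrite /g ffunE (negbTE ik).
have -> : [exists j in A, (j + d == i)%N && setc c k x j] =
          [exists j in A, (j + d == i)%N && c j].
  apply: eq_existsb => j /=; rewrite ffunE; case: (j =P k) => // ->.
  by rewrite (negbTE kA).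
by [].
Qed.

Lemma prod_split (A : {set 'I_n}) k c x : k \in A -> chainend A k ->
  \prod_(i in A) g A (setc c k x) i =
  g A (setc c k x) k * \prod_(i in A :\ k) g (A :\ k) c i.
Proof.
move=> kA ce; rewrite (bigD1 k) //=; congr (_ * _).
rewrite [RHS](eq_bigl (fun i => (i \in A) && (i != k))); last first.
  by move=> i; rewrite in_setD1 andbC.
apply: eq_bigr => i /andP[iA ik].
by rewrite (g_rem _ ce iA) g_setc // in_setD1 eqxx.
Qed.

Lemma Q_step1 (A : {set 'I_n}) k : k \in A -> chainend A k ->
  (forall j, j \in A -> (j + d != k)%N) -> Q A = (1 - p * a) * Q (A :\ k).
Proof.
move=> kA ce hj; rewrite /Q (Eind _ k) mulr_sumr; apply: eq_bigr => c _.
rewrite !prod_split // /g !ffunE eqxx.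
case: existsP => [[j /andP[jA ejk]]|_]; first by have := hj j jA; rewrite ejk.
ring.
Qed.

Lemma ce_pred (A : {set 'I_n}) (k j : 'I_n) : k \in A -> (j + d == k)%N -> chainend A k -> chainend (A :\ k) j.
Proof.
move=> kA ejk ce i; rewrite in_setD1 => /andP[ik iA]; apply/negP => /eqP e.
move: ejk; rewrite e => /eqP e2; move: ik; by rewrite (val_inj e2) eqxx.
Qed.

Lemma Q_step2 (A : {set 'I_n}) (k j : 'I_n) : k \in A -> j \in A -> (j + d == k)%N -> chainend A k ->
  Q A = Q (A :\ k) - p * a * Q (A :\ k :\ j).
Proof.
move=> kA jA ejk ce.
have jk : j != k.
  apply/negP => /eqP e; move: ejk; rewrite e -{2}(addn0 k) eqn_add2l.
  by case: d Hd.
have ceJ := ce_pred kA ejk ce.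
have gk : forall c x, g A (setc c k x) k = if x then (if c j then 1 else 1 - b) else 1.
  move=> c x; rewrite /g ffunE eqxx; case: x => //.
  have -> : [exists j0 in A, (j0 + d == k)%N] by apply/existsP; exists j; rewrite jA ejk.
  have -> : [exists j0 in A, (j0 + d == k)%N && setc c k true j0] = c j.
    apply/existsP/idP => [[j0 /and3P[j0A ej0 cj0]]|cj].
      move: ejk; rewrite -(eqP ej0) eqn_add2r => /eqP e; move: cj0.
      by rewrite -(val_inj e) ffunE (negbTE jk).
    by exists j; rewrite jA ejk ffunE (negbTE jk).
  by [].
set S := \sum_(c : fb) bern_weight p c *
   ((if c j then 0 else 1) * \prod_(i in A :\ k) g (A :\ k) c i).
have H1 : Q A = Q (A :\ k) - p * b * S.
  rewrite /Q /S (Eind _ k) mulr_sumr -sumrB; apply: eq_bigr => c _.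
  rewrite !prod_split // !gk; case: (c j); ring.
have jA' : j \in A :\ k by rewrite in_setD1 jk jA.
have H2 : S = (1 - p) * Q (A :\ k :\ j).
  rewrite /S (Eind _ j) /Q mulr_sumr; apply: eq_bigr => c _.
  rewrite !ffunE eqxx /= !(prod_split _ _ jA' ceJ).
  have -> : g (A :\ k) (setc c j false) j = 1 by rewrite /g ffunE eqxx.
  ring.
rewrite H1 H2 abq; ring.
Qed.

Lemma ratio m : forall A : {set 'I_n}, (#|A| <= m)%N -> forall k, k \in A -> chainend A k ->
  Q (A :\ k) / 2 <= Q A /\ Q A <= (1 - p * a) * Q (A :\ k).
Proof.
have hx := x_le; have hx0 := x_ge0.
elim: m => [|m IH] A hA k kA ce.
  by move: hA; rewrite leqn0 => /eqP/cards0_eq A0; rewrite A0 in_set0 in kA.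
have hC : (#|A :\ k| <= m)%N by move: hA; rewrite (cardsD1 k A) kA.
case: (boolP [exists j in A, (j + d == k)%N]) => [/existsP [j /andP[jA ejk]] | hn].
  rewrite (Q_step2 kA jA ejk ce).
  have jk : j != k.
    apply/negP => /eqP e; move: ejk; rewrite e -{2}(addn0 k) eqn_add2l.
    by case: d Hd.
  have jA' : j \in A :\ k by rewrite in_setD1 jk jA.
  have [h1 h2] := IH _ hC j jA' (ce_pred kA ejk ce).
  have hB := Q_ge0 (A :\ k :\ j); have hCC := Q_ge0 (A :\ k).
  set B := Q (A :\ k :\ j) in h1 h2 hB *; set C := Q (A :\ k) in h1 h2 hCC *.
  set x := p * a in hx hx0 h2 *.
  have e1 : 0 <= (1/4 - x) * B by rewrite mulr_ge0 // subr_ge0.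
  have e2 : 0 <= x * (B - C) by rewrite mulr_ge0 // subr_ge0; nra.
  split; lra.
rewrite (Q_step1 kA ce); last first.
  move=> j jA; move/existsPn: hn => hn; by move: (hn j); rewrite jA.
have hCC := Q_ge0 (A :\ k).
have e1 : 0 <= (1/2 - p * a) * Q (A :\ k) by rewrite mulr_ge0 // subr_ge0; lra.
split; lra.
Qed.

Lemma Qbound m : forall A : {set 'I_n}, (#|A| <= m)%N -> Q A <= (1 - p * a) ^+ #|A|.
Proof.
have hx := x_le.
elim: m => [|m IH] A hA.
  by move: hA; rewrite leqn0 => /eqP/cards0_eq ->; rewrite Q0 cards0 expr0.
case: (set_0Vmem A) => [->|[k0 k0A]]; first by rewrite Q0 cards0 expr0.
case: (arg_maxnP (fun i : 'I_n => nat_of_ord i) k0A) => k kA kmax.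
have {}kA : k \in A by [].
have ce : chainend A k.
  move=> i iA; apply/negP => /eqP e; move: (kmax i iA); rewrite -e.
  by rewrite /geq /= leqNgt -addn1 leq_add2l Hd.
have [_ h] := ratio (leqnn _) kA ce.
have hC : (#|A :\ k| <= m)%N by move: hA; rewrite (cardsD1 k A) kA.
have := IH _ hC => h2.
rewrite (cardsD1 k A) kA exprS; apply: (le_trans h); rewrite ler_wpM2l //; lra.
Qed.

Lemma exd (i : 'I_n) : [exists j : 'I_n, (j + d == i)%N] = (d <= i)%N.
Proof.
apply/existsP/idP => [[j /eqP <-]|hi]; first exact: leq_addl.
have hl : (i - d < n)%N by exact: leq_ltn_trans (leq_subr d i) (ltn_ord i).
by exists (Ordinal hl); rewrite /= subnK.
Qed.

Lemma conn : prob_all_covered M n d p = Q setT.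
Proof.
rewrite /prob_all_covered /Q; apply: eq_bigr => c _.
have -> : \prod_(i in [set: 'I_n]) g setT c i = \prod_i g setT c i.
  by apply: eq_bigl => i; rewrite in_setT.
set h := fun (i : 'I_n) (u : bool) =>
  if [|| ~~ c i, u | [exists j : 'I_n, (j + d == i)%N && c j]]
  then (if u then 1 - probU0 M d p i else probU0 M d p i) else 0.
have HU : forall U : fb, (if [forall i, covered d c U i] then bern_weight p c * U_weight M d p U else 0)
   = bern_weight p c * \prod_i h i (U i).
  move=> U; case: (boolP [forall i, covered d c U i]) => [/forallP H | /forallPn [i0 Hi0]].
    congr (_ * _); rewrite /U_weight; apply: eq_bigr => i _; rewrite /h.
    by have := H i; rewrite /covered => ->.
  rewrite (bigD1 i0) //= {1}/h; move: Hi0; rewrite /covered => /negbTE ->.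
  by rewrite mul0r mulr0.
rewrite (eq_bigr (fun U : fb => bern_weight p c * \prod_i h i (U i))); last by move=> U _; exact: HU.
rewrite -big_distrr /= -bigA_distr_bigA; congr (_ * _); apply: eq_bigr => i _.
rewrite big_bool /h /g orbT /=.
have exT : forall P : pred 'I_n, [exists j in [set: 'I_n], P j] = [exists j, P j].
  by move=> P; apply: eq_existsb => j; rewrite in_setT.
rewrite (exT (fun j => (j + d == i)%N && c j)) (exT (fun j => (j + d == i)%N)).
case: (c i) => /=; last by rewrite subrK.
case: existsP => [[j /andP[ej _]]|_].
  have -> : [exists j0 : 'I_n, (j0 + d == i)%N] by apply/existsP; exists j.
  by rewrite subrK.
by rewrite addr0 /probU0 exd; case: ltnP.
Qed.

Lemma main_sec : prob_all_covered M n d p <= (1 - p * (1 - p) ^+ M) ^+ n.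
Proof.
rewrite conn; have := Qbound (leqnn #|[set: 'I_n]|).
by rewrite cardsT card_ord.
Qed.

End S.

Theorem mainTheorem3 (R : realFieldType) (M n d : nat) (p : R) :
  (1 <= M)%N -> (2 <= n)%N -> (1 <= d)%N -> (d <= n - 1)%N -> 0 < p -> p < 1 ->
  prob_all_covered M n d p <= (1 - p * (1 - p) ^+ M) ^+ n.
Proof.
move=> HM _ Hd _ p0 p1; by apply: main_sec.
Qed.
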